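(* Let $R$ be a left and right Noetherian ring and $A\in\operatorname{mod}R$. Then for every Gorenstein projective module $H\in\operatorname{mod}R^{op}$ and every transpose $\operatorname{Tr}A$ of $A$, the module $H\oplus\operatorname{Tr}A$ is a Gorenstein transpose of $A$.
   Context: $\operatorname{mod}R$ (resp. $\operatorname{mod}R^{op}$) is the category of finitely generated left (resp. right) $R$-modules, and $(-)^*=\operatorname{Hom}(-,R)$. A module is Gorenstein projective if it is isomorphic to $\operatorname{Im}(P_0\to P^0)$ for some exact complex $\cdots\to P_1\to P_0\to P^0\to P^1\to\cdots$ of projective modules that stays exact under $\operatorname{Hom}(-,P)$ for every projective $P$. A transpose of $A\in\operatorname{mod}R$ is $\operatorname{Coker}(f^*:P_0^*\to P_1^* )$ for some exact sequence $P_1\xrightarrow{f}P_0\to A\to0$ in $\operatorname{mod}R$ with $P_0,P_1$ projective. A Gorenstein transpose of $A$ is $\operatorname{Coker}(g^*:X_0^*\to X_1^* )$ for some exact sequence $X_1\xrightarrow{g}X_0\to A\to 0$ in $\operatorname{mod}R$ with $X_0,X_1$ Gorenstein projective. *)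

(* Defs.v *)
(* Modules over a (possibly non-commutative) ring R:
   left R-modules  = lmodType R,
   right R-modules = lmodType R^c (R^c = converse ring; the right action
                     m.r is written (r : R^c) *: m).
   The ring R regarded as a left module over itself is R^o (regular). *)
From HB Require Import structures.
From mathcomp Require Import all_boot all_order all_algebra.
Set Implicit Arguments. Unset Strict Implicit. Unset Printing Implicit Defensive.
Import GRing.Theory.
Local Open Scope ring_scope.

Definition fin_gen (S : pzRingType) (M : lmodType S) : Prop :=
  exists (n : nat) (s : 'I_n -> M),
    forall m : M, exists c : 'I_n -> S, m = \sum_(i < n) c i *: s i.

Definition surj (S : pzRingType) (M N : lmodType S) (g : {linear M -> N}) : Prop :=
  forall y : N, exists x : M, g x = y.

Definition exact_at (S : pzRingType) (M N K : lmodType S)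
  (g : {linear M -> N}) (h : {linear N -> K}) : Prop :=
  forall y : N, h y = 0 <-> exists x : M, g x = y.

Definition projective (S : pzRingType) (P : lmodType S) : Prop :=
  fin_gen P /\
  forall (M N : lmodType S) (g : {linear M -> N}) (f : {linear P -> N}),
    surj g -> exists h : {linear P -> M}, forall p : P, g (h p) = f p.

(* G is Gorenstein projective: G is isomorphic to Im (d 0 : P 0 -> P 1) for an
   exact Z-indexed complex (P i, d i : P i -> P (i+1)) of projective modules
   which stays exact under Hom(-, Q) for every projective Q. *)
Definition gorenstein_projective (S : pzRingType) (G : lmodType S) : Prop :=
  exists (P : int -> lmodType S) (d : forall i : int, {linear P i -> P (i + 1)}),
    [/\ (forall i, projective (P i)),
        (forall i, exact_at (d i) (d (i + 1))),
        (forall (Q : lmodType S), projective Q ->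
           forall (i : int) (phi : {linear P (i + 1) -> Q}),
             (forall x, phi (d i x) = 0) ->
             exists psi : {linear P (i + 1 + 1) -> Q},
               forall y, phi y = psi (d (i + 1) y)) &
        (exists e : {linear G -> P (0 + 1)},
          injective e /\ (forall y, (exists g, e g = y) <-> (exists x, d 0 x = y)))].

(* T (a right R-module) is isomorphic to Coker (f^dual : P0^dual -> P1^dual), where
   X^dual = Hom_R(X, R) = {linear X -> R^o} with right action (u.r)(x) = u(x) r.
   The isomorphism Coker f^dual ~ T is given as a surjective right-linear map
   phi : P1^dual -> T whose kernel is the image of f^dual (precomposition with f). *)
Definition coker_dual (R : pzRingType) (P1 P0 : lmodType R)
  (f : {linear P1 -> P0}) (T : lmodType R^c) : Prop :=
  exists phi : {linear P1 -> R^o} -> T,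
    [/\ (forall u v w : {linear P1 -> R^o},
           (forall x, (w x : R) = u x + v x) -> phi w = phi u + phi v),
        (forall (u w : {linear P1 -> R^o}) (r : R),
           (forall x, (w x : R) = (u x : R) * r) -> phi w = (r : R^c) *: phi u),
        (forall t : T, exists u, phi u = t) &
        (forall u, (phi u = 0) <->
           (exists g : {linear P0 -> R^o}, forall x, u x = g (f x)))].

Definition is_transpose (R : pzRingType) (A : lmodType R) (T : lmodType R^c) : Prop :=
  exists (P1 P0 : lmodType R) (f : {linear P1 -> P0}) (p : {linear P0 -> A}),
    [/\ projective P1, projective P0, exact_at f p, surj p & coker_dual f T].

Definition is_Gtranspose (R : pzRingType) (A : lmodType R) (T : lmodType R^c) : Prop :=
  exists (X1 X0 : lmodType R) (g : {linear X1 -> X0}) (p : {linear X0 -> A}),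
    [/\ gorenstein_projective X1 /\ fin_gen X1,
        gorenstein_projective X0 /\ fin_gen X0,
        exact_at g p, surj p & coker_dual g T].

Definition left_noetherian (S : pzRingType) : Prop :=
  forall I : pred S,
    I 0 -> (forall x y, I x -> I y -> I (x + y)) ->
    (forall r x, I x -> I (r * x)) ->
    exists (n : nat) (s : 'I_n -> S), (forall i, I (s i)) /\
      forall x, I x -> exists c : 'I_n -> S, x = \sum_(i < n) c i * s i.

Definition right_noetherian (S : pzRingType) : Prop := left_noetherian S^c.

(* Main.v *)
Require Import Defs.
From HB Require Import structures.
From mathcomp Require Import all_boot all_order all_algebra.
From Stdlib Require Import ClassicalEpsilon FunctionalExtensionality ProofIrrelevance.
Set Implicit Arguments. Unset Strict Implicit. Unset Printing Implicit Defensive.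
Import GRing.Theory.
Local Open Scope ring_scope.

Definition cl_eqb (T : Type) (x y : T) : bool :=
  if excluded_middle_informative (x = y) then true else false.
Lemma cl_eqP (T : Type) : Equality.axiom (@cl_eqb T).
Proof. move=> x y; rewrite /cl_eqb; case: excluded_middle_informative => h; by constructor. Qed.

Definition cl_find (T : Type) (P : pred T) (n : nat) : option T :=
  match excluded_middle_informative (exists x, P x) with
  | left h => Some (proj1_sig (constructive_indefinite_description _ h))
  | right _ => None end.

Lemma cl_find_correct T (P : pred T) n x : cl_find P n = Some x -> P x.
Proof. rewrite /cl_find; case: excluded_middle_informative => // h [<-].
exact: proj2_sig (constructive_indefinite_description _ h). Qed.
Lemma cl_find_complete T (P : pred T) : (exists x, P x) -> exists n, cl_find P n.
Proof. move=> h; exists 0%N; rewrite /cl_find; by case: excluded_middle_informative. Qed.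
Lemma cl_find_ext T (P Q : pred T) : P =1 Q -> cl_find P =1 cl_find Q.
Proof. move=> h; have -> : P = Q by apply: functional_extensionality. by []. Qed.

Section Dual.
Variables (R : pzRingType) (M : lmodType R^c).
Record rdual := RDual {
  rdf :> M -> R;
  rdfD : forall x y, rdf (x + y) = rdf x + rdf y;
  rdfZ : forall (r : R) x, rdf ((r : R^c) *: x) = rdf x * r }.

Lemma rdual_ext (u v : rdual) : (forall x, u x = v x) -> u = v.
Proof.
case: u => f fD fZ; case: v => g gD gZ /= h.
have e : f = g by apply: functional_extensionality.
subst g; f_equal; apply: proof_irrelevance.
Qed.

HB.instance Definition _ := hasDecEq.Build rdual (@cl_eqP rdual).
HB.instance Definition _ := hasChoice.Build rdual (@cl_find_correct rdual) (@cl_find_complete rdual) (@cl_find_ext rdual).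

Lemma rdf0 (u : rdual) : u 0 = 0.
Proof. by apply: (@addIr _ (u 0)); rewrite -rdfD !add0r. Qed.

Definition rd0 : rdual.
Proof. refine (@RDual (fun _ => 0) _ _); move=> *; by rewrite ?addr0 ?mul0r. Defined.
Definition rdopp (u : rdual) : rdual.
Proof. refine (@RDual (fun x => - u x) _ _); move=> *; by rewrite ?rdfD ?rdfZ ?opprD ?mulNr. Defined.
Definition rdadd (u v : rdual) : rdual.
Proof. refine (@RDual (fun x => u x + v x) _ _); move=> *; rewrite ?rdfD ?rdfZ ?mulrDl //.
by rewrite addrACA. Defined.
Definition rdscale (r : R) (u : rdual) : rdual.
Proof. refine (@RDual (fun x => r * u x) _ _); move=> *; by rewrite ?rdfD ?rdfZ ?mulrDr ?mulrA. Defined.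

Lemma rd_addA : associative rdadd. Proof. by move=> *; apply: rdual_ext => x /=; rewrite addrA. Qed.
Lemma rd_addC : commutative rdadd. Proof. by move=> *; apply: rdual_ext => x /=; rewrite addrC. Qed.
Lemma rd_add0 : left_id rd0 rdadd. Proof. by move=> *; apply: rdual_ext => x /=; rewrite add0r. Qed.
Lemma rd_addN : left_inverse rd0 rdopp rdadd. Proof. by move=> *; apply: rdual_ext => x /=; rewrite addNr. Qed.
HB.instance Definition _ := GRing.isZmodule.Build rdual rd_addA rd_addC rd_add0 rd_addN.
Lemma rd_scaleA a b v : rdscale a (rdscale b v) = rdscale (a * b) v.
Proof. by apply: rdual_ext => x /=; rewrite mulrA. Qed.
Lemma rd_scale1 : left_id 1 rdscale. Proof. by move=> *; apply: rdual_ext => x /=; rewrite mul1r. Qed.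
Lemma rd_scaleDr : right_distributive rdscale +%R. Proof. by move=> *; apply: rdual_ext => x /=; rewrite mulrDr. Qed.
Lemma rd_scaleDl v : {morph rdscale^~ v: a b / a + b}. Proof. by move=> *; apply: rdual_ext => x /=; rewrite mulrDl. Qed.
HB.instance Definition _ := GRing.Zmodule_isLmodule.Build R rdual rd_scaleA rd_scale1 rd_scaleDr rd_scaleDl.

Lemma rdaddE (u v : rdual) x : (u + v) x = u x + v x. Proof. by []. Qed.
Lemma rdscaleE r (u : rdual) x : (r *: u) x = r * u x. Proof. by []. Qed.
Lemma rd0E x : (0 : rdual) x = 0. Proof. by []. Qed.
End Dual.

Definition mkLin (S : pzRingType) (U V : lmodType S) (f : U -> V) (H : linear f) : {linear U -> V} :=
  HB.pack f (GRing.isLinear.Build S U V *:%R f H).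
Lemma mkLinE (S : pzRingType) (U V : lmodType S) (f : U -> V) (H : linear f) x : mkLin H x = f x.
Proof. by []. Qed.
Section Generic.
Variable S : pzRingType.

Lemma fin_gen_fin (M : lmodType S) (I : finType) (s : I -> M) :
  (forall m : M, exists c : I -> S, m = \sum_i c i *: s i) -> fin_gen M.
Proof.
move=> h; exists #|I|, (fun k => s (enum_val k)) => m.
have [c ->] := h m; exists (fun k => c (enum_val k)).
rewrite (reindex (enum_val : 'I_#|I| -> I)) //=.
by exists enum_rank => x _; rewrite ?enum_valK ?enum_rankK.
Qed.

Lemma lin_sum (M N : lmodType S) (f : {linear M -> N}) (I : finType) (F : I -> M) :
  f (\sum_i F i) = \sum_i f (F i).
Proof. exact: linear_sum. Qed.
End Generic.
Section DB.
Variable S : pzRingType.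

Definition dbasis (P : lmodType S) : Prop :=
  exists (I : finType) (s : I -> P) (u : I -> {linear P -> S^o}),
    forall x, x = \sum_i (u i x : S) *: s i.

Lemma proj_dbasis (P : lmodType S) : projective P -> dbasis P.
Proof.
case=> [[n [s hs]] hl].
pose pi (c : 'rV[S]_n) : P := \sum_i c 0 i *: s i.
have lpi : linear pi.
  move=> a c c'; rewrite /pi scaler_sumr -big_split /=; apply: eq_bigr => i _.
  by rewrite !mxE scalerDl scalerA.
have spi : surj (mkLin lpi).
  move=> y; have [c ->] := hs y; exists (\row_i c i); rewrite mkLinE /pi.
  by apply: eq_bigr => i _; rewrite mxE.
have lid : linear (fun x : P => x) by [].
have [h hh] := hl _ _ _ (mkLin lid) spi.
have lu : forall i : 'I_n, linear (fun x : P => (h x 0 i : S^o)).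
  by move=> i a x y; rewrite linearP !mxE.
exists 'I_n, s, (fun i => mkLin (lu i)) => x.
by have := hh x; rewrite !mkLinE /pi => {1}<-.
Qed.

Lemma dbasis_proj (P : lmodType S) : dbasis P -> projective P.
Proof.
move=> [I [s [u hu]]]; split.
  by apply: (@fin_gen_fin _ _ I s) => m; exists (fun i => u i m); exact: hu.
move=> M N g f sg.
pose m i := proj1_sig (constructive_indefinite_description _ (sg (f (s i)))).
have hm : forall i, g (m i) = f (s i).
  by move=> i; exact: proj2_sig (constructive_indefinite_description _ (sg (f (s i)))).
have lh : linear (fun x : P => \sum_i (u i x : S) *: m i).
  move=> a x y; rewrite scaler_sumr -big_split /=; apply: eq_bigr => i _.
  by rewrite linearP scalerDl scalerA.
exists (mkLin lh) => p; rewrite mkLinE linear_sum {2}(hu p) linear_sum.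
by apply: eq_bigr => i _; rewrite !linearZ hm.
Qed.

Lemma proj_fin_gen (P : lmodType S) : projective P -> fin_gen P.
Proof. by case. Qed.

Lemma fin_gen_surj (M N : lmodType S) (f : {linear M -> N}) :
  surj f -> fin_gen M -> fin_gen N.
Proof.
move=> sf [n [s hs]]; exists n, (fun i => f (s i)) => y.
have [x <-] := sf y; have [c ->] := hs x; exists c.
by rewrite linear_sum; apply: eq_bigr => i _; rewrite linearZ.
Qed.

Lemma fst_sum (M N : lmodType S) (I : finType) (F : I -> (M * N)%type) :
  (\sum_i F i).1 = \sum_i (F i).1.
Proof. by apply: (big_morph (fun z : (M * N)%type => z.1)). Qed.
Lemma snd_sum (M N : lmodType S) (I : finType) (F : I -> (M * N)%type) :
  (\sum_i F i).2 = \sum_i (F i).2.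
Proof. by apply: (big_morph (fun z : (M * N)%type => z.2)). Qed.

Lemma pair_split (M N : lmodType S) (z : (M * N)%type) : z = (z.1, 0) + (0, z.2).
Proof. case: z => a b; apply: injective_projections => /=; by rewrite ?addr0 ?add0r. Qed.

Lemma fin_gen_prod (M N : lmodType S) : fin_gen M -> fin_gen N -> fin_gen (M * N)%type.
Proof.
move=> [n [s hs]] [m [t ht]].
apply: (@fin_gen_fin _ _ ('I_n + 'I_m)%type
  (fun k => match k with inl i => (s i, 0) | inr j => (0, t j) end)) => [[x y]].
have [c ->] := hs x; have [c' ->] := ht y.
exists (fun k => match k with inl i => c i | inr j => c' j end).
rewrite big_sumType /=; apply: injective_projections => /=; rewrite ?fst_sum ?snd_sum /=.
- by rewrite [X in _ + X]big1 ?addr0 // => i _; rewrite scaler0.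
- by rewrite [X in X + _]big1 ?add0r // => i _; rewrite scaler0.
Qed.

Lemma dbasis_prod (M N : lmodType S) : dbasis M -> dbasis N -> dbasis (M * N)%type.
Proof.
move=> [I [s [u hu]]] [J [t [v hv]]].
have lu : forall i, linear (fun z : (M * N)%type => (u i z.1 : S^o)).
  by move=> i a z z'; rewrite /= linearP.
have lv : forall j, linear (fun z : (M * N)%type => (v j z.2 : S^o)).
  by move=> j a z z'; rewrite /= linearP.
exists (I + J)%type, (fun k => match k with inl i => (s i, 0) | inr j => (0, t j) end),
  (fun k => match k with inl i => mkLin (lu i) | inr j => mkLin (lv j) end) => [[x y]].
rewrite big_sumType /=; apply: injective_projections => /=; rewrite ?fst_sum ?snd_sum /=.
- by rewrite [X in _ + X]big1 ?addr0 -?hu // => i _; rewrite scaler0.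
- by rewrite [X in X + _]big1 ?add0r -?hv // => i _; rewrite scaler0.
Qed.

Lemma proj_prod (M N : lmodType S) : projective M -> projective N -> projective (M * N)%type.
Proof. by move=> /proj_dbasis hM /proj_dbasis hN; apply: dbasis_proj; apply: dbasis_prod. Qed.

End DB.
Section GP.
Variable S : pzRingType.

Lemma lin_pair (M N : lmodType S) (K : zmodType) (f : M -> K) (g : N -> K) :
  True -> True.
Proof. by []. Qed.

Lemma gp_proj (P : lmodType S) : projective P -> gorenstein_projective P.
Proof.
move=> hP.
pose C := fun _ : int => (P * P)%type : lmodType S.
have ld : linear (fun z : (P * P)%type => (z.2, 0) : (P * P)%type).
  move=> a z z'; apply: injective_projections => /=; by rewrite ?scaler0 ?addr0.
pose d := fun i : int => (mkLin ld : {linear C i -> C (i + 1)}).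
exists C, d; split.
- by move=> i; apply: proj_prod.
- move=> i [a b]; rewrite !mkLinE /=; split.
    by move=> /(congr1 fst) /= ->; exists (0, a).
  by case=> [[x y]] /=; case=> _ <-.
- move=> Q hQ i phi hphi.
  have lpsi : linear (fun z : (P * P)%type => phi (0, z.1)).
    move=> a z z' /=; rewrite -(linearP phi); congr (phi _).
    by apply: injective_projections => /=; rewrite ?scaler0 ?addr0.
  exists (mkLin lpsi) => [[a b]]; rewrite !mkLinE /=.
  rewrite (pair_split (a, b)) linearD /=.
  by have := hphi (0, a); rewrite mkLinE /= => ->; rewrite add0r.
- have le : linear (fun x : P => (x, 0) : C (0 + 1)).
    move=> a x y; apply: injective_projections => /=; by rewrite ?scaler0 ?addr0.
  exists (mkLin le); split.
    by move=> x y; rewrite !mkLinE; case.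
  move=> y; rewrite /=; split.
    by case=> g <-; exists (0, g).
  by case=> x <-; exists x.2.
Qed.

Lemma gp_prod (X Y : lmodType S) :
  gorenstein_projective X -> gorenstein_projective Y -> gorenstein_projective (X * Y)%type.
Proof.
move=> [P [d [hP hex hhom [e [ei he]]]]] [P' [d' [hP' hex' hhom' [e' [ei' he']]]]].
pose C := fun i : int => (P i * P' i)%type : lmodType S.
have ld : forall i, linear (fun z : C i => (d i z.1, d' i z.2) : C (i + 1)).
  move=> i a z z'; apply: injective_projections => /=; by rewrite linearP.
pose D := fun i => mkLin (ld i).
exists C, D; split.
- by move=> i; apply: proj_prod.
- move=> i [a b]; rewrite !mkLinE /=; split.
    move=> h; have /= ha := congr1 fst h; have /= hb := congr1 snd h.
    have [x hx] := (hex i a).1 ha; have [x' hx'] := (hex' i b).1 hb.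
    by exists (x, x'); rewrite /= hx hx'.
  case=> [[x x']] /=; case=> <- <-.
  by congr pair; [apply/(hex i _).2; exists x | apply/(hex' i _).2; exists x'].
- move=> Q hQ i phi hphi.
  have l1 : linear (fun z : P (i + 1) => phi (z, 0)).
    move=> a z z' /=; rewrite -(linearP phi); congr (phi _).
    by apply: injective_projections => /=; rewrite ?scaler0 ?addr0.
  have l2 : linear (fun z : P' (i + 1) => phi (0, z)).
    move=> a z z' /=; rewrite -(linearP phi); congr (phi _).
    by apply: injective_projections => /=; rewrite ?scaler0 ?addr0.
  have [psi1 h1] : exists psi1 : {linear P (i + 1 + 1) -> Q},
      forall y, mkLin l1 y = psi1 (d (i + 1) y).
    apply: hhom => // x; rewrite mkLinE.
    by have := hphi (x, 0); rewrite mkLinE /= linear0.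
  have [psi2 h2] : exists psi2 : {linear P' (i + 1 + 1) -> Q},
      forall y, mkLin l2 y = psi2 (d' (i + 1) y).
    apply: hhom' => // x; rewrite mkLinE.
    by have := hphi (0, x); rewrite mkLinE /= linear0.
  have lpsi : linear (fun z : C (i + 1 + 1) => psi1 z.1 + psi2 z.2).
    move=> a z z' /=; rewrite !linearP scalerDr.
    by rewrite addrACA.
  exists (mkLin lpsi) => y; rewrite !mkLinE /=.
  rewrite {1}(pair_split y) linearD -h1 -h2.
  by [].
- have le : linear (fun z : (X * Y)%type => (e z.1, e' z.2) : C (0 + 1)).
    by move=> a z z'; apply: injective_projections => /=; rewrite linearP.
  exists (mkLin le); split.
    move=> [x y] [x' y']; rewrite /= => h.
    by rewrite (ei x x' (congr1 fst h)) (ei' y y' (congr1 snd h)).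
  move=> [a b]; rewrite /=; split.
    case=> [[x y]]; rewrite /=; case=> ha hb.
    have [z hz] := (he a).1 (ex_intro _ x ha); have [z' hz'] := (he' b).1 (ex_intro _ y hb).
    by exists (z, z'); rewrite /= hz hz'.
  case=> [[x y]]; rewrite /=; case=> ha hb.
  have [z hz] := (he a).2 (ex_intro _ x ha); have [z' hz'] := (he' b).2 (ex_intro _ y hb).
  by exists (z, z'); rewrite /= hz hz'.
Qed.
End GP.
Section Right.
Variable R : pzRingType.
Local Notation RR := ((R^c)^o).

Lemma RR_scale (a : R) (x : RR) : ((a : R^c) *: x : R) = (x : R) * a.
Proof. by []. Qed.

Definition toL (M : lmodType R^c) (u : rdual M) : {linear M -> RR}.
Proof. refine (@mkLin _ M RR (fun x => (u x : RR)) _).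
by move=> a x y; rewrite rdfD rdfZ. Defined.
Lemma toLE (M : lmodType R^c) (u : rdual M) x : (toL u x : R) = u x. Proof. by []. Qed.

Definition fromL (M : lmodType R^c) (f : {linear M -> RR}) : rdual M.
Proof. refine (@RDual _ M (fun x => (f x : R)) _ _).
- by move=> x y; rewrite linearD.
- by move=> r x; rewrite linearZ. Defined.
Lemma fromLE (M : lmodType R^c) (f : {linear M -> RR}) x : fromL f x = f x. Proof. by []. Qed.

Definition rdcomp (M N : lmodType R^c) (v : rdual N) (f : {linear M -> N}) : rdual M.
Proof. refine (@RDual _ M (fun x => v (f x)) _ _).
- by move=> x y; rewrite linearD rdfD.
- by move=> r x; rewrite linearZ rdfZ. Defined.
Lemma rdcompE (M N : lmodType R^c) (v : rdual N) (f : {linear M -> N}) x : rdcomp v f x = v (f x).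
Proof. by []. Qed.

Lemma rd_sumE (M : lmodType R^c) (I : finType) (F : I -> rdual M) x :
  (\sum_i F i) x = \sum_i F i x.
Proof. by apply: (big_morph (fun u : rdual M => u x)) => //= u v. Qed.

Lemma rdfN (M : lmodType R^c) (u : rdual M) x : u (- x) = - u x.
Proof. by apply: (@addrI _ (u x)); rewrite -rdfD !subrr rdf0. Qed.
Lemma rdfB (M : lmodType R^c) (u : rdual M) x y : u (x - y) = u x - u y.
Proof. by rewrite rdfD rdfN. Qed.
Lemma rdf_sum (M : lmodType R^c) (u : rdual M) (I : finType) (F : I -> M) :
  u (\sum_i F i) = \sum_i u (F i).
Proof. by apply: (big_morph u); [apply: rdfD | apply: rdf0]. Qed.

Section DBfacts.
Variable P : lmodType R^c.
Hypothesis hP : dbasis P.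

Lemma db_sep (x : P) : (forall v : rdual P, v x = 0) -> x = 0.
Proof.
move: hP => [I [s [u hu]]] h; rewrite (hu x); apply: big1 => i _.
by have := h (fromL (u i)); rewrite fromLE => ->; rewrite scale0r.
Qed.

Lemma db_expand (I : finType) (s : I -> P) (u : I -> {linear P -> RR}) :
  (forall x, x = \sum_i (u i x : R^c) *: s i) ->
  forall v : rdual P, v = \sum_i v (s i) *: fromL (u i).
Proof.
move=> hu v; apply: rdual_ext => y; rewrite rd_sumE {1}(hu y) rdf_sum.
by apply: eq_bigr => i _; rewrite rdfZ rdscaleE fromLE.
Qed.

Lemma db_refl (Phi : {linear rdual P -> R^o}) : exists x : P, forall v, Phi v = v x.
Proof.
move: hP => [I [s [u hu]]].
exists (\sum_i ((Phi (fromL (u i)) : R) : R^c) *: s i) => v.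
rewrite rdf_sum {1}(db_expand hu v) linear_sum; apply: eq_bigr => i _.
by rewrite linearZ rdfZ.
Qed.

Lemma db_dual : dbasis (rdual P).
Proof.
move: hP => [I [s [u hu]]].
have lev : forall i, linear (fun v : rdual P => (v (s i) : R^o)).
  by move=> i a v w.
exists I, (fun i => fromL (u i)), (fun i => mkLin (lev i)) => v.
exact: db_expand.
Qed.
End DBfacts.

Lemma db_RR : dbasis RR.
Proof.
have lid : linear (fun x : RR => (x : (R^c)^o)) by [].
exists 'I_1, (fun _ => (1 : RR)), (fun _ => mkLin lid) => x.
rewrite big_ord1 mkLinE.
by rewrite /GRing.scale /= mulr1.
Qed.

End Right.
Definition idL (S : pzRingType) (M : lmodType S) : {linear M -> M} :=
  @mkLin S M M (fun x => x) (fun _ _ _ => erefl).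

Section Main.
Variables (R : pzRingType) (H : lmodType R^c) (P : int -> lmodType R^c)
  (d : forall i : int, {linear P i -> P (i + 1)}).
Hypotheses (hP : forall i, projective (P i))
  (hex : forall i, exact_at (d i) (d (i + 1)))
  (hhom : forall (Q : lmodType R^c), projective Q ->
           forall (i : int) (phi : {linear P (i + 1) -> Q}),
             (forall x, phi (d i x) = 0) ->
             exists psi : {linear P (i + 1 + 1) -> Q},
               forall y, phi y = psi (d (i + 1) y))
  (e : {linear H -> P (0 + 1)}) (ei : injective e)
  (he : forall y, (exists g, e g = y) <-> (exists x, d 0 x = y)).
Local Notation RR := ((R^c)^o).

Definition castP (i k : int) (E : i = k) : {linear P i -> P k} :=
  match E in _ = k return {linear P i -> P k} with erefl => idL (P i) end.

Lemma castP_inj i k (E : i = k) x y : castP E x = castP E y -> x = y.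
Proof. by case: k / E. Qed.

Definition D (a b : int) (E : a + 1 = b) : {linear P a -> P b}.
Proof. refine (@mkLin _ (P a) (P b) (fun x => castP E (d a x)) _).
by move=> r x y; rewrite !linearP. Defined.

Lemma hdb i : dbasis (P i). Proof. exact: proj_dbasis. Qed.

Lemma exactD a b c (E1 : a + 1 = b) (E2 : b + 1 = c) y :
  D E2 y = 0 <-> exists x, D E1 x = y.
Proof. subst b; subst c; exact: hex. Qed.

Lemma DD0 a b c (E1 : a + 1 = b) (E2 : b + 1 = c) x : D E2 (D E1 x) = 0.
Proof. by apply/(exactD E1); exists x. Qed.

Lemma homD a b c (E1 : a + 1 = b) (E2 : b + 1 = c) (v : rdual (P b)) :
  (forall x, v (D E1 x) = 0) -> exists w : rdual (P c), forall y, v y = w (D E2 y).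
Proof.
subst b; subst c => hv.
have [psi hpsi] := @hhom _ (dbasis_proj (db_RR R)) a (toL v) hv.
by exists (fromL psi) => y; rewrite fromLE -hpsi.
Qed.

Lemma homDQ a b c (E1 : a + 1 = b) (E2 : b + 1 = c) (Q' : lmodType R)
  (hQ : projective Q') (phi : {linear rdual (P b) -> Q'}) :
  (forall v : rdual (P c), phi (rdcomp v (D E2)) = 0) ->
  exists psi : {linear rdual (P a) -> Q'}, forall v, phi v = psi (rdcomp v (D E1)).
Proof.
move=> hphi; have [I [t [w hw]]] := proj_dbasis hQ.
have lPhi : forall k, linear (fun v : rdual (P b) => (w k (phi v) : R^o)).
  by move=> k r v v'; rewrite !linearP.
pose xk k := proj1_sig (constructive_indefinite_description _ (db_refl (hdb b) (mkLin (lPhi k)))).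
have hxk : forall k v, (w k (phi v) : R) = v (xk k).
  move=> k v; have := proj2_sig (constructive_indefinite_description _ (db_refl (hdb b) (mkLin (lPhi k)))) v.
  by rewrite mkLinE.
have hx0 : forall k, exists z, D E1 z = xk k.
  move=> k; apply/(exactD E1 E2); apply: (db_sep (hdb c)) => v.
  by rewrite -rdcompE -hxk hphi linear0.
pose zk k := proj1_sig (constructive_indefinite_description _ (hx0 k)).
have hzk : forall k, D E1 (zk k) = xk k.
  by move=> k; exact: proj2_sig (constructive_indefinite_description _ (hx0 k)).
have lpsi : linear (fun y : rdual (P a) => \sum_k (y (zk k) : R) *: t k).
  move=> r y y'; rewrite scaler_sumr -big_split /=; apply: eq_bigr => k _.
  by rewrite scalerDl scalerA.
exists (mkLin lpsi) => v; rewrite mkLinE {1}(hw (phi v)).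
by apply: eq_bigr => k _; rewrite rdcompE hzk hxk.
Qed.

Definition eH (b : int) (F : 0 + 1 = b) : {linear H -> P b}.
Proof. refine (@mkLin _ H (P b) (fun h => castP F (e h)) _).
by move=> r x y; rewrite !linearP. Defined.

Section HPart.
Variables (a' a b c : int) (E' : a' + 1 = a) (E : a + 1 = b) (E2 : b + 1 = c) (F : 0 + 1 = b).

Lemma eH_inj : injective (eH F).
Proof. by move=> x y /castP_inj /ei. Qed.

Lemma imH_gen (a0 b0 : int) (E0 : a0 + 1 = b0) (F0 : 0 + 1 = b0) y :
  (exists h, eH F0 h = y) <-> exists x, D E0 x = y.
Proof.
have ha : a0 = 0 by apply: (addIr 1); rewrite E0 F0.
subst a0; subst b0; rewrite (proof_irrelevance _ F0 erefl); exact: he.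
Qed.

Lemma imH y : (exists h, eH F h = y) <-> exists x, D E x = y.
Proof. exact: imH_gen. Qed.

Definition etil (x : P a) : H :=
  proj1_sig (constructive_indefinite_description _ ((imH (D E x)).2 (ex_intro _ x erefl))).
Lemma etil_spec x : eH F (etil x) = D E x.
Proof. exact: proj2_sig (constructive_indefinite_description _ ((imH (D E x)).2 (ex_intro _ x erefl))). Qed.

Definition etilL : {linear P a -> H}.
Proof. refine (@mkLin _ (P a) H etil _).
by move=> r x y; apply: eH_inj; rewrite linearP !etil_spec linearP. Defined.

Lemma etil_surj h : exists x, etil x = h.
Proof.
have [x hx] := (imH (eH F h)).1 (ex_intro _ h erefl).
by exists x; apply: eH_inj; rewrite etil_spec.
Qed.

Lemma etil_D' x : etil (D E' x) = 0.
Proof. by apply: eH_inj; rewrite etil_spec DD0 linear0. Qed.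

Definition iota (u : rdual H) : rdual (P a) := rdcomp u etilL.

Lemma iota_inj : injective iota.
Proof.
move=> u u' h; apply: rdual_ext => z; have [x <-] := etil_surj z.
by have := congr1 (fun w : rdual (P a) => w x) h.
Qed.

Definition iotaL : {linear rdual H -> rdual (P a)}.
Proof. refine (@mkLin _ (rdual H) (rdual (P a)) iota _).
by move=> r u v; apply: rdual_ext. Defined.

Lemma iota_im y : (exists u, iota u = y) <-> exists x : rdual (P b), rdcomp x (D E) = y.
Proof.
split.
  case=> u <-.
  have hv : forall z, iota u (D E' z) = 0.
    by move=> z; rewrite /iota rdcompE /= etil_D' rdf0.
  have [w hw] := @homD a' a b E' E (iota u) hv.
  by exists w; apply: rdual_ext => z; rewrite rdcompE -hw.
case=> x <-; exists (rdcomp x (eH F)); apply: rdual_ext => z.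
by move: (etil_spec z) => /= ->.
Qed.

Lemma rho_surj (u : rdual H) : exists x : rdual (P b), rdcomp x (eH F) = u.
Proof.
have [x hx] := (iota_im (iota u)).1 (ex_intro _ u erefl).
exists x; apply: iota_inj; rewrite -hx; apply: rdual_ext => z.
by move: (etil_spec z) => /= ->.
Qed.

Lemma sep_H h : (forall u : rdual H, u h = 0) -> h = 0.
Proof.
move=> hh; apply: eH_inj; rewrite linear0; apply: (db_sep (hdb b)) => v.
by rewrite -(hh (rdcomp v (eH F))).
Qed.

Lemma refl_H (Phi : {linear rdual H -> R^o}) : exists h, forall u, Phi u = u h.
Proof.
have lPhiR : linear (fun v : rdual (P b) => Phi (rdcomp v (eH F))).
  move=> r v v'; rewrite -linearP; congr (Phi _); exact: rdual_ext.
have [y hy] := db_refl (hdb b) (mkLin lPhiR).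
have hy0 : D E2 y = 0.
  apply: (db_sep (hdb c)) => w; rewrite -rdcompE -hy mkLinE.
  have -> : rdcomp (rdcomp w (D E2)) (eH F) = 0.
    apply: rdual_ext => h; rewrite !rdcompE rd0E.
    have [x hx] := (imH (eH F h)).1 (ex_intro _ h erefl).
    by rewrite -hx DD0 rdf0.
  by rewrite linear0.
have [x hx] := (exactD E E2 y).1 hy0.
exists (etil x) => u; have [v <-] := rho_surj u.
by rewrite rdcompE etil_spec hx -hy mkLinE.
Qed.

Lemma fin_gen_H : fin_gen (rdual H).
Proof.
have lrho : linear (fun v : rdual (P b) => rdcomp v (eH F)).
  by move=> r v v'; apply: rdual_ext.
apply: (@fin_gen_surj _ _ _ (mkLin lrho)).
  by move=> u; have [v hv] := rho_surj u; exists v.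
exact: proj_fin_gen (dbasis_proj (db_dual (hdb b))).
Qed.
End HPart.

Lemma Ej (j : int) : (1 - (j + 1)) + 1 = 1 - j.
Proof. by rewrite opprD addrA subrK. Qed.

Lemma F01 : (0 : int) + 1 = 1 - 0.
Proof. by rewrite add0r subr0. Qed.

Lemma gp_dual : gorenstein_projective (rdual H).
Proof.
pose Q := fun j : int => (rdual (P (1 - j)) : lmodType R).
have ld : forall j, linear (fun v : Q j => (rdcomp v (D (Ej j)) : Q (j + 1))).
  by move=> j r v v'; apply: rdual_ext.
pose dQ := fun j => mkLin (ld j).
exists Q, dQ; split.
- by move=> j; apply: dbasis_proj; apply: db_dual; apply: hdb.
- move=> j y; rewrite !mkLinE; split.
    move=> hy.
    have hv : forall x, y (D (Ej (j + 1)) x) = 0.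
      by move=> x; have := congr1 (fun w : rdual _ => w x) hy.
    have [w hw] := @homD _ _ _ (Ej (j + 1)) (Ej j) y hv.
    by exists w; rewrite mkLinE; apply: rdual_ext => z; rewrite rdcompE -hw.
  case=> x <-; rewrite mkLinE; apply: rdual_ext => z.
  by rewrite !rdcompE DD0 rdf0.
- move=> Q' hQ i phi hphi.
  have [psi hpsi] := @homDQ _ _ _ (Ej (i + 1)) (Ej i) _ hQ phi hphi.
  by exists psi => y; rewrite mkLinE.
- exists (iotaL (Ej 0) F01); split.
    by move=> u u'; rewrite !mkLinE; apply: iota_inj.
  move=> y; rewrite /=.
  have := iota_im (Ej (0 + 1)) (Ej 0) F01 y.
  by [].
Qed.

End Main.
Theorem corollary3p2 (R : pzRingType)
  (hl : left_noetherian R) (hr : right_noetherian R)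
  (A : lmodType R) (hA : fin_gen A)
  (H : lmodType R^c) (hHfg : fin_gen H) (hH : gorenstein_projective H)
  (T : lmodType R^c) (hT : is_transpose A T) :
  is_Gtranspose A (H * T)%type.
Proof.
move: hH => [P [d [hP hex hhom [e [ei he]]]]].
have E' : (-1 : int) + 1 = 0 by [].
pose G := (rdual H : lmodType R).
have gpG : gorenstein_projective G := gp_dual hP hex hhom ei he.
have fgG : fin_gen G := fin_gen_H hP hex hhom ei he E' (erefl (0 + 1)) (erefl (0 + 1)).
have reflG := refl_H hP hex hhom ei he E' (erefl (0 + 1)) (erefl (0 + 1 + 1)) (erefl (0 + 1)).
have sepG := sep_H hP ei (erefl (0 + 1)).
move: hT => [P1 [P0 [f [p [hP1 hP0 hfp sp [phiT [phD phZ phS phK]]]]]]].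
have lg : linear (fun z : (P1 * G)%type => f z.1).
  by move=> r z z'; rewrite /= linearP.
exists (P1 * G)%type, P0, (mkLin lg), p; split.
- split; [exact: gp_prod (gp_proj hP1) gpG | exact: fin_gen_prod (proj_fin_gen hP1) fgG].
- split; [exact: gp_proj | exact: proj_fin_gen].
- move=> y; rewrite (hfp y); split.
    by case=> x <-; exists (x, 0).
  by case=> z <-; exists z.1.
- exact: sp.
pose psiH (Phi : {linear G -> R^o}) : H := proj1_sig (constructive_indefinite_description _ (reflG Phi)).
have psiH_spec : forall (Phi : {linear G -> R^o}) (g : G), Phi g = g (psiH Phi).
  by move=> Phi; exact: proj2_sig (constructive_indefinite_description _ (reflG Phi)).
have psiH_uniq : forall (Phi : {linear G -> R^o}) (h : H), (forall g : G, Phi g = g h) -> psiH Phi = h.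
  move=> Phi h hh; apply/eqP; rewrite -subr_eq0; apply/eqP; apply: sepG => g.
  by rewrite rdfB -psiH_spec hh subrr.
have l0 : linear (fun _ : P1 => (0 : R^o)) by move=> r x y; rewrite scaler0 addr0.
have phiT0 : phiT (mkLin l0) = 0.
  have := phD (mkLin l0) (mkLin l0) (mkLin l0) (fun x => esym (addr0 _)).
  by rewrite -{1}(addr0 (phiT (mkLin l0))) => /addrI <-.
have phiT_ext : forall u v : {linear P1 -> R^o}, (forall x, u x = v x) -> phiT u = phiT v.
  move=> u v huv; rewrite (phD v (mkLin l0) u) ?phiT0 ?addr0 // => x.
  by rewrite huv mkLinE addr0.
have linl : forall u : {linear (P1 * G)%type -> R^o}, linear (fun x : P1 => u (x, 0)).
  move=> u r x y; rewrite -linearP; congr (u _).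
  by apply: injective_projections => /=; rewrite ?scaler0 ?addr0.
have linr : forall u : {linear (P1 * G)%type -> R^o}, linear (fun y : G => u (0, y)).
  move=> u r x y; rewrite -linearP; congr (u _).
  by apply: injective_projections => /=; rewrite ?scaler0 ?addr0.
exists (fun u => (psiH (mkLin (linr u)), phiT (mkLin (linl u)))); split.
- move=> u v w huvw; apply: injective_projections => /=.
    apply: psiH_uniq => g; rewrite mkLinE huvw rdfD.
    by rewrite -!(mkLinE (linr _)) -!psiH_spec.
  by apply: phD => x; rewrite !mkLinE huvw.
- move=> u w r huw; apply: injective_projections => /=.
    apply: psiH_uniq => g; rewrite mkLinE huw rdfZ.
    by rewrite -!(mkLinE (linr _)) -!psiH_spec.
  by apply: phZ => x; rewrite !mkLinE huw.
- move=> [h t]; have [u1 hu1] := phS t.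
  have lu : linear (fun z : (P1 * G)%type => (u1 z.1 : R^o) + (z.2 h : R^o)).
    move=> r z z'; rewrite /= linearP scalerDr addrACA.
    by [].
  exists (mkLin lu); apply: injective_projections => /=.
    by apply: psiH_uniq => g; rewrite mkLinE /= linear0 add0r.
  by rewrite -hu1; apply: phiT_ext => x; rewrite mkLinE /= addr0.
- move=> u; split.
    move=> hu; have /= h1 := congr1 fst hu; have /= h2 := congr1 snd hu.
    have [g' hg'] := (phK _).1 h2.
    exists g' => z; rewrite (pair_split z) linearD /=.
    have -> : u (0, z.2) = 0.
      by rewrite -(mkLinE (linr u)) psiH_spec h1 rdf0.
    by rewrite !addr0; move: (hg' z.1); rewrite mkLinE.
  case=> g' hg'; apply: injective_projections => /=.
    by apply: psiH_uniq => g; rewrite mkLinE hg' /= linear0 linear0 rdf0.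
  apply/(phK _).2; exists g' => x; by rewrite mkLinE hg'.
Qed.
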